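(* Let $\Delta\ge 3$ be an integer and let $c_1,\dots,c_\Delta$ be defined by $c_\Delta=\frac{1}{\Delta}$ and $ic_i+c_{i+1}=1$ for $i=1,\dots,\Delta-1$. Let $\varepsilon>0$ and $j\in\{1,\dots,\Delta\}$. Then there are infinitely many graphs $G\in\mathcal{G}_\Delta$ for which the inequality $$\alpha(G)\ge \varepsilon|V_j(G)|+\sum_{i=1}^{\Delta} c_i|V_i(G)|$$ does not hold.
   Context: All graphs are simple, finite and undirected. For an integer $\Delta\ge 3$, $\mathcal{G}_\Delta$ denotes the set of connected graphs $G\neq K_{\Delta+1}$ with maximum degree $\Delta$. For a graph $G$ and $i\ge 1$, $V_i(G)$ is the set of vertices of $G$ of degree $i$. $\alpha(G)$ is the independence number of $G$. *)

(* Defs.v *)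
From HB Require Import structures.
From mathcomp Require Import all_boot all_order all_algebra.
From mathcomp Require Import reals.
Set Implicit Arguments. Unset Strict Implicit. Unset Printing Implicit Defensive.

Definition simple_graph (n : nat) (e : rel 'I_n) : bool :=
  [forall x, ~~ e x x] && [forall x, forall y, e x y == e y x].

Definition deg (n : nat) (e : rel 'I_n) (x : 'I_n) : nat := #|[set y | e x y]|.

Definition maxdeg (n : nat) (e : rel 'I_n) : nat := \max_(x : 'I_n) deg e x.

Definition connected_graph (n : nat) (e : rel 'I_n) : bool :=
  (0 < n) && [forall x, forall y, connect e x y].

Definition is_complete (m n : nat) (e : rel 'I_n) : bool :=
  (n == m) && [forall x, forall y, (x != y) ==> e x y].

Definition Vdeg (n : nat) (e : rel 'I_n) (i : nat) : {set 'I_n} :=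
  [set x | deg e x == i].

Definition independent (n : nat) (e : rel 'I_n) (A : {set 'I_n}) : bool :=
  [forall x in A, forall y in A, ~~ e x y].

Definition alpha (n : nat) (e : rel 'I_n) : nat :=
  \max_(A : {set 'I_n} | independent e A) #|A|.

Definition in_GDelta (Delta n : nat) (e : rel 'I_n) : bool :=
  [&& simple_graph e, connected_graph e, maxdeg e == Delta
    & ~~ is_complete Delta.+1 e].

(* Main.v *)
Require Import Defs.
From HB Require Import structures.
From mathcomp Require Import all_boot all_order all_algebra.
From mathcomp Require Import reals.
From mathcomp Require Import zify.
Set Implicit Arguments. Unset Strict Implicit. Unset Printing Implicit Defensive.
Import Order.TTheory GRing.Theory Num.Theory.

Definition degT (T : finType) (e : rel T) (z : T) : nat := #|[set w | e z w]|.

Definition eI (T : finType) (e : rel T) : rel 'I_#|T| :=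
  fun x y => e (enum_val x) (enum_val y).

Lemma card_transfer (T : finType) (P : pred T) :
  #|[set y : 'I_#|T| | P (enum_val y)]| = #|[set z | P z]|.
Proof.
rewrite -(card_imset _ (@enum_rank_inj T)); apply: eq_card => y.
apply/idP/idP.
- rewrite inE => Hy; apply/imsetP; exists (enum_val y); first by rewrite inE.
  by rewrite enum_valK.
- by case/imsetP=> z; rewrite !inE => Hz ->; rewrite enum_rankK.
Qed.

Lemma deg_transfer (T : finType) (e : rel T) x : deg (eI e) x = degT e (enum_val x).
Proof. by rewrite /deg /eI card_transfer. Qed.

Lemma Vdeg_transfer (T : finType) (e : rel T) i :
  #|Vdeg (eI e) i| = #|[set z | degT e z == i]|.
Proof.
rewrite /Vdeg -(card_transfer (fun z => degT e z == i)); apply: eq_card => y.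
by rewrite !inE deg_transfer.
Qed.

Lemma conn_transfer (T : finType) (e : rel T) :
  forall p a, path e a p -> connect (eI e) (enum_rank a) (enum_rank (last a p)).
Proof.
elim=> [|b p IH] a /=; first by rewrite connect0.
case/andP=> hab hp; apply: connect_trans (IH b hp).
by apply: connect1; rewrite /eI !enum_rankK.
Qed.

Lemma connect_transfer (T : finType) (e : rel T) x y :
  connect e (enum_val x) (enum_val y) -> connect (eI e) x y.
Proof.
case/connectP=> p hp hl.
by have := conn_transfer hp; rewrite -hl !enum_valK.
Qed.

Lemma alpha_le (n : nat) (e : rel 'I_n) (K : finType) (f : 'I_n -> K) :
  (forall x y, x != y -> f x = f y -> e x y) -> (alpha e <= #|K|)%N.
Proof.
move=> hf; apply/bigmax_leqP => A hA.
have inj : {in A &, injective f}.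
  move=> x y xA yA fxy; apply/eqP/negPn/negP => nxy.
  have := hf _ _ nxy fxy.
  by move/forallP: hA => /(_ x); rewrite xA /= => /forallP /(_ y); rewrite yA /= => /negP.
by rewrite -(card_in_imset inj) max_card.
Qed.

Lemma alpha_transfer (T : finType) (e : rel T) (K : finType) (f : T -> K) :
  (forall x y, x != y -> f x = f y -> e x y) -> (alpha (eI e) <= #|K|)%N.
Proof.
move=> hf; apply: (@alpha_le _ _ _ (fun x => f (enum_val x))) => x y nxy fxy.
apply: hf fxy; apply: contra nxy => /eqP h.
by apply/eqP; apply: (can_inj (@enum_valK T)).
Qed.
From HB Require Import structures.
From mathcomp Require Import all_boot all_order all_algebra.
From mathcomp Require Import zify.
Set Implicit Arguments. Unset Strict Implicit. Unset Printing Implicit Defensive.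

Notation VT m D s := ('I_m * 'I_D + 'I_s)%type.

Definition gE (m D s : nat) (x y : VT m D s) : bool :=
  match x, y with
  | inl (b, p), inl (b', p') =>
      [|| (b == b') && (p != p'),
          [&& b'.+1 == b :> nat, p == 0 :> nat & p'.+1 == D]
        | [&& b.+1 == b' :> nat, p.+1 == D & p' == 0 :> nat]]
  | inl (b, p), inr q => [&& b == 0 :> nat, p == 1 :> nat & q == 0 :> nat]
  | inr q, inl (b, p) => [&& b == 0 :> nat, p == 1 :> nat & q == 0 :> nat]
  | inr q, inr q' => q != q'
  end.

Lemma gE_sym m D s : symmetric (@gE m D s).
Proof.
case=> [[b p]|q] [[b' p']|q'] //=.
- by rewrite eq_sym (eq_sym p); case: (b == b'); case: (p == p'); rewrite /= ?orbF; lia.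
- by rewrite eq_sym.
Qed.

Lemma gE_irr m D s x : ~~ @gE m D s x x.
Proof. case: x => [[b p]|q] /=; rewrite ?eqxx //=; lia. Qed.
From HB Require Import structures.
From mathcomp Require Import all_boot all_order all_algebra.
From mathcomp Require Import zify.
Set Implicit Arguments. Unset Strict Implicit. Unset Printing Implicit Defensive.

Definition blk m D s (b : 'I_m) : {set VT m D s} :=
  [set z : VT m D s | if z is inl (b', _) then b' == b else false].

Lemma blk_part m D s (b : 'I_m) (p : 'I_D) :
  [set w | gE (inl (b, p)) w] :&: blk D s b =
  [set inl (b, p') | p' in [set~ p]].
Proof.
apply/setP => -[[b' p']|q]; rewrite !inE /=.
- apply/idP/imsetP.
  + case/andP=> h /eqP ebb; subst b'; exists p'; rewrite ?inE //.
    move: h; rewrite eqxx /= eq_sym; case/orP=> [->//|]; lia.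
  + case=> p'' ; rewrite !inE => hp [-> ->]; rewrite eqxx /= andbT.
    by rewrite eq_sym hp.
- rewrite andbF; apply/esym/negbTE/imsetP; by case.
Qed.

Lemma blk_card m D s (b : 'I_m) (p : 'I_D) :
  #|[set w | gE (inl (b, p)) w] :&: blk D s b| = D.-1.
Proof.
rewrite blk_part card_imset ?cardsC1 ?card_ord //.
by move=> x y [].
Qed.

Lemma extra_le1 m D s (b : 'I_m) (p : 'I_D) : (3 <= D)%N ->
  (#|[set w | gE (inl (b, p)) w] :\: blk D s b| <= 1)%N.
Proof.
move=> D3; apply/card_le1_eqP => z1 z2; rewrite !inE.
case: z1 => [[b1 p1]|q1]; case: z2 => [[b2 p2]|q2] /=.
- move=> /andP[h1 h2] /andP[h3 h4].
  rewrite eq_sym in h1; rewrite eq_sym in h3.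
  move: h2 h4; rewrite (negbTE h1) (negbTE h3) /= => h2 h4.
  have eb: b1 = b2 by apply: ord_inj; lia.
  have ep: p1 = p2 by apply: ord_inj; lia.
  by rewrite eb ep.
- move=> /andP[h1 h2] h3; rewrite eq_sym in h1.
  move: h2; rewrite (negbTE h1) /=; lia.
- move=> h3 /andP[h1 h2]; rewrite eq_sym in h1.
  move: h2; rewrite (negbTE h1) /=; lia.
- move=> h1 h2; congr inr; apply: ord_inj; lia.
Qed.

Lemma deg_inl m D s (b : 'I_m) (p : 'I_D) : (3 <= D)%N ->
  (D.-1 <= degT (@gE m D s) (inl (b, p)) <= D)%N.
Proof.
move=> D3; rewrite /degT -(cardsID (blk D s b)) blk_card.
apply/andP; split; first exact: leq_addr.
apply: leq_trans (leq_add (leqnn D.-1) (extra_le1 s b p D3)) _; lia.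
Qed.

Lemma deg_root m D s (b : 'I_m) (p : 'I_D) : (3 <= D)%N -> (0 < s)%N ->
  nat_of_ord b = 0%N -> nat_of_ord p = 1%N ->
  degT (@gE m D s) (inl (b, p)) = D.
Proof.
move=> D3 s0 hb hp; rewrite /degT -(cardsID (blk D s b)) blk_card.
apply/eqP; rewrite eqn_leq; apply/andP; split.
  apply: leq_trans (leq_add (leqnn D.-1) (extra_le1 s b p D3)) _; lia.
have h : (0 < #|[set w | gE (inl (b, p)) w] :\: blk D s b|)%N.
  apply/card_gt0P; exists (inr (Ordinal s0)); rewrite !inE /= hb hp; done.
apply: leq_trans (leq_add (leqnn D.-1) h); lia.
Qed.

Definition isr m D s : {set VT m D s} :=
  [set z : VT m D s | if z is inr _ then true else false].

Lemma r_part m D s (q : 'I_s) :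
  [set w | @gE m D s (inr q) w] :&: isr m D s = [set inr q' | q' in [set~ q]].
Proof.
apply/setP => -[[b' p']|q']; rewrite !inE /=.
- rewrite andbF; apply/esym/negbTE/imsetP; by case.
- rewrite andbT; apply/idP/imsetP.
  + by move=> h; exists q'; rewrite // !inE eq_sym.
  + by case=> q''; rewrite !inE => h [->]; rewrite eq_sym.
Qed.

Lemma deg_inr m D s (q : 'I_s) : (0 < m)%N -> (1 < D)%N ->
  degT (@gE m D s) (inr q) = (s.-1 + (q == 0 :> nat))%N.
Proof.
move=> m0 D1; rewrite /degT -(cardsID (isr m D s)) r_part card_imset ?cardsC1 ?card_ord;
  last by move=> x y [].
congr addn.
case: (altP (q =P 0%N :> nat)) => hq /=.
- apply/eqP; rewrite eqn_leq; apply/andP; split.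
  + apply/card_le1_eqP => -[[b1 p1]|q1] [[b2 p2]|q2]; rewrite !inE //=.
    move=> h1 h2; congr inl; congr pair; apply: ord_inj; lia.
  + apply/card_gt0P; exists (inl (Ordinal m0, Ordinal D1)); rewrite !inE /= hq; done.
- apply/eqP; rewrite cards_eq0; apply/eqP/setP => -[[b1 p1]|q1]; rewrite !inE //=.
  by rewrite (negbTE hq) !andbF.
Qed.

Lemma same_blk m D s (b : 'I_m) (p p' : 'I_D) :
  connect (@gE m D s) (inl (b, p)) (inl (b, p')).
Proof.
case: (eqVneq p p') => [->|ne]; first exact: connect0.
by apply: connect1; rewrite /= eqxx ne.
Qed.

Lemma conn_root m D s (b0 : 'I_m) (p1 : 'I_D) : (3 <= D)%N -> (0 < s)%N ->
  nat_of_ord b0 = 0%N -> nat_of_ord p1 = 1%N ->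
  forall z, connect (@gE m D s) z (inl (b0, p1)).
Proof.
move=> D3 s0 hb0 hp1.
have H : forall k (b : 'I_m) p, nat_of_ord b = k -> connect (@gE m D s) (inl (b, p)) (inl (b0, p1)).
  elim=> [|k IH] b p hb.
    have -> : b = b0 by apply: ord_inj; lia.
    exact: same_blk.
  have D0 : (0 < D)%N by lia.
  have Dl : (D.-1 < D)%N by lia.
  have km : (k < m)%N by have := ltn_ord b; lia.
  apply: connect_trans (same_blk s b p (Ordinal D0)) _.
  apply: connect_trans (IH (Ordinal km) (Ordinal Dl) erefl).
  apply: connect1; rewrite /=; apply/orP; right; apply/orP; left.
  rewrite /= hb. lia.
case=> [[b p]|q]; first exact: H.
have e0 : connect (@gE m D s) (inr (Ordinal s0)) (inl (b0, p1)).
  by apply: connect1; rewrite /= hb0 hp1.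
case: (eqVneq q (Ordinal s0)) => [->//|ne].
by apply: connect_trans e0; apply: connect1; rewrite /= ne.
Qed.

Definition blkf m D s (z : VT m D s) : option 'I_m :=
  if z is inl (b, _) then Some b else None.

Lemma blkf_clique m D s (x y : VT m D s) : x != y -> blkf x = blkf y -> gE x y.
Proof.
case: x => [[b p]|q]; case: y => [[b' p']|q'] //= ne.
- case=> eb; subst b'; rewrite eqxx /=.
  have -> // : p != p' by apply: contra ne => /eqP ->.
Qed.
From HB Require Import structures.
From mathcomp Require Import all_boot all_order all_algebra.
From mathcomp Require Import reals.
From mathcomp Require Import zify ring lra.
Set Implicit Arguments. Unset Strict Implicit. Unset Printing Implicit Defensive.
Import Order.TTheory GRing.Theory Num.Theory.
Local Open Scope ring_scope.

Lemma card_natr (R : realType) (T : finType) (P : pred T) :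
  (#|[set z | P z]|)%:R = \sum_(z : T) (P z)%:R :> R.
Proof.
rewrite -sum1_card natr_sum big_mkcond /=; apply: eq_bigr => z _.
by rewrite inE; case: (P z).
Qed.

Lemma sum_ind (R : realType) (D k : nat) (c : nat -> R) : (1 <= k <= D)%N ->
  \sum_(1 <= i < D.+1) c i * (k == i)%:R = c k.
Proof.
move=> hk; rewrite (bigD1_seq k) /=; last exact: iota_uniq.
  rewrite eqxx mulr1 big1 ?addr0 // => i /negbTE; rewrite eq_sym => ->.
  by rewrite mulr0.
by rewrite mem_index_iota; lia.
Qed.

Lemma sum_swap (R : realType) (T : finType) (D : nat) (c : nat -> R) (dg : T -> nat) :
  (forall z, 1 <= dg z <= D)%N ->
  \sum_(1 <= i < D.+1) c i * (#|[set z | dg z == i]|)%:R = \sum_(z : T) c (dg z).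
Proof.
move=> hd.
under eq_bigr => i _ do rewrite card_natr mulr_sumr.
rewrite exchange_big /=; apply: eq_bigr => z _.
rewrite -(sum_ind c (hd z)); apply: eq_bigr => i _; done.
Qed.

Lemma cD1 (R : realType) (D : nat) (c : nat -> R) : (3 <= D)%N ->
  c D = (D%:R)^-1 ->
  (forall i : nat, (1 <= i <= D.-1)%N -> i%:R * c i + c i.+1 = 1) ->
  c D.-1 = (D%:R)^-1.
Proof.
move=> D3 hD hr; have := hr D.-1.
have -> : D.-1.+1 = D by lia.
rewrite hD => /(_ ltac:(lia)) h.
case: D D3 hD hr h => [//|d] D3 _ _ /= h.
have dnz : (d%:R : R) != 0 by rewrite pnatr_eq0; lia.
have d1nz : (d.+1%:R : R) != 0 by rewrite pnatr_eq0.
apply: (mulfI dnz).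
have -> : d%:R * c d = 1 - (d.+1%:R)^-1 by rewrite -[X in X - _]h addrK.
rewrite -natr1 in d1nz *; field; done.
Qed.

Lemma total_sum (R : realType) (m D j : nat) (c : nat -> R) :
  (3 <= D)%N -> (0 < m)%N -> (1 <= j <= D.-1)%N ->
  c D = (D%:R)^-1 ->
  (forall i : nat, (1 <= i <= D.-1)%N -> i%:R * c i + c i.+1 = 1) ->
  \sum_(z : VT m D j.+1) c (degT (@gE m D j.+1) z) = (m.+1)%:R.
Proof.
move=> D3 m0 hj hD hr.
rewrite big_sumType /=.
have -> : \sum_(x : 'I_m * 'I_D) c (degT (@gE m D j.+1) (inl x)) =
          \sum_(x : 'I_m * 'I_D) (D%:R)^-1.
  apply: eq_bigr => -[b p] _.
  have := deg_inl j.+1 b p D3.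
  have hc1 := cD1 D3 hD hr.
  case/andP; set k := degT _ _ => h1 h2.
  have [->|->] : k = D.-1 \/ k = D by lia.
    exact: hc1.
  exact: hD.
rewrite sumr_const card_prod !card_ord.
have D1 : (1 < D)%N by lia.
have -> : \sum_(q : 'I_j.+1) c (degT (@gE m D j.+1) (inr q)) =
          \sum_(q : 'I_j.+1) c (j + (q == 0 :> nat))%N.
  by apply: eq_bigr => q _; rewrite deg_inr.
rewrite (bigD1 ord0) //= addn1.
have -> : \sum_(i < j.+1 | i != ord0) c (j + (i == 0 :> nat))%N =
          \sum_(i < j.+1 | i != ord0) c j.
  apply: eq_bigr => i hi; congr c.
  have -> : (nat_of_ord i == 0%N) = false by apply/negbTE; apply: contra hi => /eqP h; apply/eqP/ord_inj.
  by rewrite addn0.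
rewrite sumr_const cardC1 card_ord /=.
have := hr j hj.
have Dnz : (D%:R : R) != 0 by rewrite pnatr_eq0; lia.
move=> h.
rewrite -[_ *+ (m * D)]mulr_natr -[c j *+ j]mulr_natr natrM [c j * _]mulrC [c j.+1 + _]addrC h.
by rewrite mulrCA mulVf // mulr1 -natr1.
Qed.
From HB Require Import structures.
From mathcomp Require Import all_boot all_order all_algebra.
From mathcomp Require Import reals.
From mathcomp Require Import zify ring lra.
Set Implicit Arguments. Unset Strict Implicit. Unset Printing Implicit Defensive.
Import Order.TTheory GRing.Theory Num.Theory.
Local Open Scope ring_scope.

Theorem theorem3 (R : realType) (Delta : nat) (c : nat -> R) (eps : R) (j : nat) :
  (3 <= Delta)%N ->
  c Delta = (Delta%:R)^-1 ->
  (forall i : nat, (1 <= i <= Delta.-1)%N -> i%:R * c i + c i.+1 = 1) ->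
  0 < eps ->
  (1 <= j <= Delta)%N ->
  forall N : nat, exists (n : nat) (e : rel 'I_n),
    [/\ (N <= n)%N, in_GDelta Delta e &
      ~ (eps * (#|Vdeg e j|)%:R + \sum_(1 <= i < Delta.+1) c i * (#|Vdeg e i|)%:R
          <= (alpha e)%:R)].
Proof.
move=> D3 hD hr eps0 hj N.
pose j' := minn j Delta.-1.
have hj' : (1 <= j' <= Delta.-1)%N by rewrite /j'; lia.
pose m := N.+1.
have m0 : (0 < m)%N by [].
have D1 : (1 < Delta)%N by lia.
have s0 : (0 < j'.+1)%N by [].
pose G := @gE m Delta j'.+1.
have hcard : #|{: VT m Delta j'.+1}| = (m * Delta + j'.+1)%N.
  by rewrite card_sum card_prod !card_ord.
have degb : forall z : VT m Delta j'.+1, (1 <= degT G z <= Delta)%N.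
  case=> [[b p]|q].
    move: (deg_inl j'.+1 b p D3); rewrite /G; set k := degT _ _; lia.
  by rewrite /G deg_inr //; lia.
pose r : VT m Delta j'.+1 := inl (ord0, Ordinal D1).
have degr : degT G r = Delta by rewrite /G deg_root.
exists #|{: VT m Delta j'.+1}|, (eI G); split.
- rewrite hcard; lia.
- apply/and4P; split.
  + apply/andP; split; apply/forallP => x; first exact: gE_irr.
    by apply/forallP => y; apply/eqP; apply: gE_sym.
  + apply/andP; split; first by rewrite hcard; lia.
    apply/forallP => x; apply/forallP => y; apply: connect_transfer.
    have hr0 := conn_root (s:=j'.+1) (b0 := (ord0 : 'I_m)) (p1 := Ordinal D1) D3 s0 erefl erefl.
    apply: connect_trans (hr0 (enum_val x)) _.
    rewrite (sym_connect_sym (@gE_sym m Delta j'.+1)).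
    exact: hr0.
  + rewrite /maxdeg eqn_leq; apply/andP; split.
      apply/bigmax_leqP => x _; rewrite deg_transfer.
      by case/andP: (degb (enum_val x)).
    apply: leq_trans (leq_bigmax (enum_rank r)).
    by rewrite deg_transfer enum_rankK degr.
  + rewrite /is_complete; apply/nandP; left; rewrite hcard; lia.
- under eq_bigr => i _ do rewrite Vdeg_transfer.
  rewrite Vdeg_transfer (sum_swap c degb) total_sum //.
  have ha : (alpha (eI G) <= m.+1)%N.
    have := alpha_transfer (@blkf_clique m Delta j'.+1).
    by rewrite card_option card_ord.
  have hv : (0 < #|[set z | degT G z == j]|)%N.
    apply/card_gt0P.
    case: (ltnP j Delta) => hjD.
      have q1 : (1 < j'.+1)%N by lia.
      exists (inr (Ordinal q1)); rewrite inE /G deg_inr //=; apply/eqP; rewrite /j'; lia.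
    exists r; rewrite inE degr; apply/eqP; lia.
  have pos : 0 < eps * (#|[set z | degT G z == j]|)%:R.
    by apply: mulr_gt0 => //; rewrite ltr0n.
  have ha' : ((alpha (eI G))%:R : R) <= (m.+1)%:R by rewrite ler_nat.
  move=> H; lra.
Qed.
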